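(* Let $F=\{T_1,\dots,T_n\}$ be a finite family of reduction operators relative to a well-ordered set $(G,<)$. Then \[\mathrm{lt}(\mathrm{syz}(F))=\{e_{i,g_0}\mid 2\le i\le n\ \text{and}\ g_0\in\mathrm{red}(U_{i-1}\vee T_i)\},\] where $U_{i-1}=T_1\wedge\dots\wedge T_{i-1}$.
   Context: Let $\mathbb{K}$ be a field, $(G,<)$ a well-ordered set and $\mathbb{K}G$ the vector space with basis $G$. For $v\neq0$, $\mathrm{lt}(v)$ is the greatest element of $G$ appearing with nonzero coefficient in $v$. Extend $<$ to $\mathbb{K}G$: $u<v$ if $u=0$ and $v\neq0$, or if $\mathrm{lt}(u)<\mathrm{lt}(v)$; $u\le v$ means $u<v$ or $u=v$. A reduction operator is an idempotent linear endomorphism $T$ of $\mathbb{K}G$ with $T(g)\le g$ for all $g\in G$; $\mathrm{red}(T)=\{g\in G\mid T(g)\neq g\}$. For every subspace $V$ there is a unique reduction operator $\ker^{-1}(V)$ with kernel $V$; $T\wedge T'=\ker^{-1}(\ker T+\ker T')$, $T\vee T'=\ker^{-1}(\ker T\cap\ker T')$, and $T_1\wedge\dots\wedge T_k=\ker^{-1}(\sum\ker T_j)$; $\wedge F=T_1\wedge\dots\wedge T_n$. Let $\mathbf{ker}(F)=\ker T_1\times\dots\times\ker T_n$, $\pi_F(v_1,\dots,v_n)=v_1+\dots+v_n\in\ker(\wedge F)$ and $\mathrm{syz}(F)=\ker\pi_F$. For $g\in\mathrm{red}(T_i)$, $e_{i,g}$ is the tuple with $g-T_i(g)$ at position $i$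 and $0$ elsewhere; these form a basis of $\mathbf{ker}(F)$, well-ordered by $e_{i,g}\sqsubset e_{i',g'}$ iff $i<i'$, or $i=i'$ and $g<g'$. The leading term of a nonzero element of $\mathbf{ker}(F)$ is the $\sqsubset$-greatest $e_{i,g}$ appearing with nonzero coefficient in it, and $\mathrm{lt}(\mathrm{syz}(F))$ is the set of leading terms of nonzero elements of $\mathrm{syz}(F)$. *)

(* Defs.v *)
(* with multinomials' monoid algebra {malg K[G]} as the
   K-vector space with basis G (finitely supported functions G -> K). *)
From HB Require Import structures.
From mathcomp Require Import all_boot all_order all_algebra.
From mathcomp Require Import finmap.
From mathcomp.multinomials Require Import monalg.
From Stdlib Require Import ClassicalEpsilon.

Set Implicit Arguments.
Unset Strict Implicit.
Unset Printing Implicit Defensive.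

Import Order.TTheory GRing.Theory.
Local Open Scope ring_scope.

Section ReductionOperators.
Context {K : fieldType} {d : Order.disp_t} {G : orderType d}.

Notation KG := {malg K[G]}.

(* lt(v): the greatest element of G with nonzero coefficient in v
   (None for v = 0). *)
Definition lead (v : KG) : option G :=
  foldr (fun g o => Some (if o is Some h then Order.max g h else g))
        None (msupp v).

Definition vlt (u v : KG) : bool :=
  ((u == 0) && (v != 0)) ||
  match lead u, lead v with
  | Some a, Some b => (a < b)%O
  | _, _ => false
  end.

Definition vle (u v : KG) : bool := vlt u v || (u == v).

Definition is_reduction (T : KG -> KG) : Prop :=
  [/\ (forall (a : K) (u v : KG), T (a *: u + v) = a *: T u + T v),
      (forall v, T (T v) = T v) &
      (forall g : G, vle (T << g >>) << g >>)].

Definition red (T : KG -> KG) (g : G) : bool := T << g >> != << g >>.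

(* ker^{-1}(V): the (unique) reduction operator whose kernel is V. *)
Definition ker_inv (P : KG -> Prop) : KG -> KG :=
  epsilon (inhabits id)
    (fun T => is_reduction T /\ forall v, T v = 0 <-> P v).

(* T /\ T' = ker^{-1}(ker T + ker T'),  T \/ T' = ker^{-1}(ker T cap ker T') *)
Definition rmeet (T T' : KG -> KG) : KG -> KG :=
  ker_inv (fun v => exists u u', T u = 0 /\ T' u' = 0 /\ v = u + u').
Definition rjoin (T T' : KG -> KG) : KG -> KG :=
  ker_inv (fun v => T v = 0 /\ T' v = 0).

(* T_1 /\ ... /\ T_k = ker^{-1}(ker T_1 + ... + ker T_k),
   for a family indexed by 1..n (T : nat -> _). *)
Definition rmeet_upto (T : nat -> KG -> KG) (k : nat) : KG -> KG :=
  ker_inv (fun v => exists w : nat -> KG,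
             (forall j, (1 <= j <= k)%N -> T j (w j) = 0) /\
             v = \sum_(1 <= j < k.+1) w j).

(* Elements of ker(F) = ker T_1 x ... x ker T_n are tuples w, encoded as
   w : nat -> KG, with only the entries 1..n relevant. *)
Definition in_kerF (n : nat) (T : nat -> KG -> KG) (w : nat -> KG) : Prop :=
  forall j, (1 <= j <= n)%N -> T j (w j) = 0.

Definition nonzero_tuple (n : nat) (w : nat -> KG) : Prop :=
  exists j, (1 <= j <= n)%N /\ w j != 0.

Definition in_syz (n : nat) (T : nat -> KG -> KG) (w : nat -> KG) : Prop :=
  in_kerF n T w /\ \sum_(1 <= j < n.+1) w j = 0.

(* c gives the coordinates of w in the basis (e_{j,h}): the coefficient
   of e_{j,h} is (c j)@_h, only h in red(T_j) are used, and
   w_j = sum_h (c j)@_h (h - T_j(h)). *)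
Definition kerF_coords (n : nat) (T : nat -> KG -> KG) (w c : nat -> KG)
  : Prop :=
  forall j, (1 <= j <= n)%N ->
    (forall h, h \in msupp (c j) -> red (T j) h) /\
    w j = \sum_(h <- msupp (c j)) (c j)@_h *: (<< h >> - T j << h >>).

(* e_{i,g} is the leading term of w (for the order
   e_{j,h} [< e_{i,g} iff j < i, or j = i and h < g). *)
Definition kerF_lt (n : nat) (T : nat -> KG -> KG) (w : nat -> KG)
  (i : nat) (g : G) : Prop :=
  exists c : nat -> KG,
    [/\ kerF_coords n T w c, (1 <= i <= n)%N, (c i)@_g != 0 &
        forall j h, (1 <= j <= n)%N -> (c j)@_h != 0 ->
          (j < i)%N \/ (j = i /\ (h <= g)%O)].

Definition in_lt_syz (n : nat) (T : nat -> KG -> KG) (i : nat) (g : G)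
  : Prop :=
  exists w, [/\ in_syz n T w, nonzero_tuple n w & kerF_lt n T w i g].

End ReductionOperators.

(* Main.v *)
Require Import Defs.
From HB Require Import structures.
From mathcomp Require Import all_boot all_order all_algebra.
From mathcomp Require Import finmap.
From mathcomp.multinomials Require Import monalg.
From Stdlib Require Import ClassicalEpsilon Classical.
From mathcomp Require Import ring zify.

Set Implicit Arguments.
Unset Strict Implicit.
Unset Printing Implicit Defensive.
Import Order.TTheory GRing.Theory.
Local Open Scope ring_scope.

Ltac malg_ring := apply/malgP => ?; rewrite ?(mcoeffB, mcoeffD, mcoeffN, mcoeffZ, mcoeff0); ring.

Section Aux.
Context {K : fieldType} {d : Order.disp_t} {G : orderType d}.
Notation KG := {malg K[G]}.
Implicit Types (u v x : KG) (g h k m : G).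

Definition topof (v : KG) (m : G) := m \in msupp v /\ forall k, k \in msupp v -> (k <= m)%O.

Lemma foldr_max (s : seq G) :
  let f := foldr (fun g o => Some (if o is Some h then Order.max g h else g)) None s in
  (f = None -> s = [::]) /\ (forall m, f = Some m -> m \in s /\ forall k, k \in s -> (k <= m)%O).
Proof.
elim: s => [|a s [IH1 IH2]] /=; first by split=> // m.
split=> // m [<-].
case E: (foldr _ _ s) => [h|].
  have [hs hmax] := IH2 _ E.
  split.
    by rewrite /Order.max; case: ifP; rewrite !inE ?eqxx ?hs ?orbT.
  move=> k; rewrite inE => /orP[/eqP->|ks]; first by rewrite le_max lexx.
  by rewrite le_max (hmax _ ks) orbT.
have -> := IH1 E.
split; first by rewrite inE.
by move=> k; rewrite inE => /eqP->.
Qed.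

Lemma leadE v m : lead v = Some m -> topof v m.
Proof. by move=> E; have [_ H] := foldr_max (msupp v); have [] := H _ E. Qed.

Lemma leadN v : lead v = None -> v = 0.
Proof.
move=> E; have [H _] := foldr_max (msupp v); have := H E.
move=> e; apply/malgP => k; rewrite mcoeff0 mcoeff_outdom //.
by rewrite -[_ \in _]/(k \in (msupp v : seq G)) e.
Qed.

Lemma top_exists v : v != 0 -> exists m, topof v m.
Proof.
move=> nz; case E: (lead v) => [m|]; first by exists m; apply: leadE.
by rewrite (leadN E) eqxx in nz.
Qed.

Lemma leadT v m : topof v m -> lead v = Some m.
Proof.
move=> [mi mx]; case E: (lead v) => [a|].
  have [ai ax] := leadE E; congr Some; apply/le_anti.
  by rewrite mx // ax.
by move: mi; rewrite (leadN E) msupp0.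
Qed.

Lemma msupp_U g : msupp (<< g >> : KG) = [fset g]%fset.
Proof. by rewrite msuppU oner_eq0. Qed.

Lemma topU g : topof (<< g >> : KG) g.
Proof. by rewrite /topof msupp_U; split=> [|k]; rewrite ?inE // => /eqP->. Qed.

Lemma scaleU (c : K) g : c *: (<< g >> : KG) = << c *g g >>.
Proof.
apply/malgP=> k; rewrite mcoeffZ !mcoeffU.
by case: eqP; rewrite ?mulr1 ?mulr0.
Qed.

Lemma decompU v : v = \sum_(h <- msupp v) v@_h *: << h >>.
Proof. by rewrite {1}(monalgE v); apply: eq_bigr => h _; rewrite scaleU. Qed.

Lemma vle_lt x g : (forall k, k \in msupp x -> (k < g)%O) -> vle x << g >>.
Proof.
move=> H; rewrite /vle /vlt; case: (eqVneq x 0) => [->|nz].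
  by rewrite monalgU_eq0 oner_neq0.
have [m tm] := top_exists nz.
by rewrite (leadT tm) (leadT (topU g)) (H _ tm.1) orbT.
Qed.

Section Lin.
Variable T : KG -> KG.
Hypothesis lin : forall (a : K) (u v : KG), T (a *: u + v) = a *: T u + T v.
Lemma lin0 : T 0 = 0.
Proof. by have := lin 1 0 0; rewrite scaler0 add0r scale1r => /eqP; rewrite -subr_eq subrr eq_sym => /eqP. Qed.
Lemma linD u v : T (u + v) = T u + T v.
Proof. by have := lin 1 u v; rewrite !scale1r. Qed.
Lemma linZ a u : T (a *: u) = a *: T u.
Proof. by have := lin a u 0; rewrite !addr0 lin0 addr0. Qed.
Lemma linN u : T (- u) = - T u.
Proof. by rewrite -scaleN1r linZ scaleN1r. Qed.
Lemma linB u v : T (u - v) = T u - T v.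
Proof. by rewrite linD linN. Qed.
Lemma lin_sum (I : Type) (s : seq I) (F : I -> KG) :
  T (\sum_(i <- s) F i) = \sum_(i <- s) T (F i).
Proof.
elim: s => [|a s IH]; first by rewrite !big_nil lin0.
by rewrite !big_cons linD IH.
Qed.
End Lin.

Section Red.
Variable T : KG -> KG.
Hypothesis hT : is_reduction T.

Lemma red_lt g k : red T g -> k \in msupp (T << g >>) -> (k < g)%O.
Proof.
case: hT => _ _ /(_ g); rewrite /vle /vlt /red => H rg.
move: H; rewrite (negbTE rg) orbF.
case: (eqVneq (T << g >>) 0) => [->|nz]; first by rewrite msupp0.
rewrite /= (leadT (topU g)); have [m tm] := top_exists nz.
rewrite (leadT tm) => mg kin.
exact: le_lt_trans (tm.2 _ kin) mg.
Qed.

Lemma nred g : ~~ red T g -> T << g >> = << g >>.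
Proof. by rewrite /red negbK => /eqP. Qed.

Lemma coefE g k : (g <= k)%O -> (<< g >> - T << g >>)@_k = (red T g && (g == k))%:R.
Proof.
move=> gk; case rg: (red T g) => /=.
  rewrite mcoeffB mcoeffU (@mcoeff_outdom _ _ (T << g >>) k) ?subr0 //.
  by apply/negP => /(red_lt rg); rewrite ltNge gk.
by rewrite nred ?rg // subrr mcoeff0.
Qed.

Lemma kerT_decomp v : T v = 0 -> v = \sum_(h <- msupp v) v@_h *: (<< h >> - T << h >>).
Proof.
move=> Tv; case: hT => lin _ _.
have E : v - T v = \sum_(h <- msupp v) v@_h *: << h >> - T (\sum_(h <- msupp v) v@_h *: << h >>)
  by rewrite -decompU.
rewrite Tv subr0 in E; rewrite {1}E (lin_sum lin) -sumrB; apply: eq_bigr => h _.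
by rewrite (linZ lin) scalerBr.
Qed.

Lemma Lker v m : T v = 0 -> topof v m -> red T m.
Proof.
move=> Tv [mi mx]; case rm: (red T m) => //.
move: mi; rewrite -mcoeff_neq0 {1}(kerT_decomp Tv) raddf_sum /= big1_seq ?eqxx //.
move=> h /andP[_ hi]; rewrite mcoeffZ coefE ?mx //.
have -> : (red T h && (h == m)) = false by case: eqP => [->|]; rewrite ?rm ?andbF.
by rewrite mulr0.
Qed.

Lemma comb_coef c k : (forall h, h \in msupp c -> red T h) ->
  (forall h, h \in msupp c -> (h <= k)%O) ->
  (\sum_(h <- msupp c) c@_h *: (<< h >> - T << h >>))@_k = c@_k.
Proof.
move=> cr ck; rewrite raddf_sum /= [in RHS](monalgE c) raddf_sum /=.
apply: eq_big_seq => h hi; rewrite mcoeffZ coefE ?ck // cr // mcoeffU /=.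
by rewrite mulr_natr.
Qed.

Lemma comb_top c m : (forall h, h \in msupp c -> red T h) -> topof c m ->
  topof (\sum_(h <- msupp c) c@_h *: (<< h >> - T << h >>)) m.
Proof.
move=> cr [mi mx]; split.
  by rewrite -mcoeff_neq0 comb_coef // mcoeff_neq0.
move=> k kin; case: (leP k m) => // mk; move: kin.
rewrite -mcoeff_neq0 comb_coef //.
  by rewrite mcoeff_neq0 => kc; have := mx _ kc; rewrite leNgt mk.
by move=> h hi; exact: le_trans (mx h hi) (ltW mk).
Qed.

Lemma red_char g : red T g <-> exists v, T v = 0 /\ topof v g.
Proof.
split=> [rg|[v [Tv tv]]]; last exact: Lker Tv tv.
case: hT => lin idem _.
exists (<< g >> - T << g >>); split.
  by rewrite (linB lin) idem subrr.
split.
  by rewrite -mcoeff_neq0 coefE // rg eqxx oner_neq0.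
move=> k /(fsubsetP (msuppB_le _ _)); rewrite inE => /orP[|].
  by rewrite msupp_U inE => /eqP->.
by move/(red_lt rg)/ltW.
Qed.

Definition coord (x : KG) : KG := [malg h in msupp x => if red T h then x@_h else 0].

Lemma coordE x h : (coord x)@_h = if red T h then x@_h else 0.
Proof. by rewrite /coord mcoeffE; case: msuppP => _; case: (red T h). Qed.

Lemma coord_red x h : h \in msupp (coord x) -> red T h.
Proof. by rewrite -mcoeff_neq0 coordE; case: (red T h); rewrite ?eqxx. Qed.

Lemma coord_sum x : T x = 0 ->
  x = \sum_(h <- msupp (coord x)) (coord x)@_h *: (<< h >> - T << h >>).
Proof.
move=> Tx; rewrite {1}(kerT_decomp Tx).
rewrite (eq_bigr (fun h => (coord x)@_h *: (<< h >> - T << h >>))); last first.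
  move=> h _; rewrite coordE; case: ifP => // /negbT nr.
  by rewrite nred // subrr !scaler0.
apply: esym; apply: big_fset_incl.
  apply/fsubsetP => h; rewrite -!mcoeff_neq0 coordE.
  by case: ifP; rewrite ?eqxx.
by move=> h _ /mcoeff_outdom ->; rewrite scale0r.
Qed.
End Red.

Section KerInv.
Hypothesis wfG : well_founded (fun x y : G => (x < y)%O).
Variable P : KG -> Prop.
Hypothesis P0 : P 0.
Hypothesis Plin : forall a u v, P u -> P v -> P (a *: u + v).

Lemma PD u v : P u -> P v -> P (u + v).
Proof. by move=> Pu Pv; have := Plin 1 Pu Pv; rewrite scale1r. Qed.
Lemma PZ a u : P u -> P (a *: u).
Proof. by move=> Pu; have := Plin a Pu P0; rewrite addr0. Qed.
Lemma PB u v : P u -> P v -> P (u - v).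
Proof. by move=> Pu Pv; apply: PD => //; rewrite -scaleN1r; apply: PZ. Qed.

Definition LP g := exists v, P v /\ topof v g.
Definition NFP u u' := P (u - u') /\ forall k, k \in msupp u' -> ~ LP k.

Lemma NFP0 : NFP 0 0.
Proof. by split; [rewrite subr0 | move=> k; rewrite msupp0]. Qed.

Lemma NF_strict m : (forall m', (m' < m)%O -> forall u,
    (forall k, k \in msupp u -> (k <= m')%O) ->
    exists u', NFP u u' /\ forall k, k \in msupp u' -> (k <= m')%O) ->
  forall u, (forall k, k \in msupp u -> (k < m)%O) ->
    exists u', NFP u u' /\ forall k, k \in msupp u' -> (k < m)%O.
Proof.
move=> IH u um; case: (eqVneq u 0) => [->|nz].
  by exists 0; split; [exact: NFP0 | move=> k; rewrite msupp0].
have [m1 [m1i m1x]] := top_exists nz.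
have [u' [Nu' bu']] := IH m1 (um _ m1i) u m1x.
by exists u'; split=> // k /bu' km1; exact: le_lt_trans km1 (um _ m1i).
Qed.

Lemma NF_le m u : (forall k, k \in msupp u -> (k <= m)%O) ->
  exists u', NFP u u' /\ forall k, k \in msupp u' -> (k <= m)%O.
Proof.
elim/(well_founded_induction wfG): m u => m IH u um.
have IHs := NF_strict IH.
case: (classic (LP m)) => [[v [Pv [vi vx]]] | nL].
  pose a := u@_m / v@_m; pose u1 := u - a *: v.
  have u1m : forall k, k \in msupp u1 -> (k < m)%O.
    move=> k kin; have km : (k <= m)%O.
      move: kin => /(fsubsetP (msuppB_le _ _)); rewrite inE => /orP[/um // |].
      by move/(fsubsetP (msuppZ_le _ _)) => /vx.
    rewrite lt_neqAle km andbT; apply/eqP => ekm; move: kin.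
    rewrite ekm -mcoeff_neq0 /u1 mcoeffB mcoeffZ /a divfK ?subrr ?eqxx //.
    by rewrite mcoeff_neq0.
  have [u1' [[Pd nL1] b1]] := IHs u1 u1m.
  exists u1'; split; [split|] => //.
    have -> : u - u1' = a *: v + (u1 - u1') by rewrite /u1; malg_ring.
    exact: Plin.
  by move=> k /b1 /ltW.
pose u1 := u - << u@_m *g m >>.
have u1m : forall k, k \in msupp u1 -> (k < m)%O.
  move=> k kin; have km : (k <= m)%O.
    move: kin => /(fsubsetP (msuppB_le _ _)); rewrite inE => /orP[/um // |].
    by move/(fsubsetP msuppU_le); rewrite inE => /eqP->.
  rewrite lt_neqAle km andbT; apply/eqP => ekm; move: kin.
  by rewrite ekm -mcoeff_neq0 /u1 mcoeffB mcoeffUU subrr eqxx.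
have [u1' [[Pd nL1] b1]] := IHs u1 u1m.
exists (u1' + << u@_m *g m >>); split; [split|].
- have -> : u - (u1' + << u@_m *g m >>) = u1 - u1' by rewrite /u1; malg_ring.
  exact: Pd.
- move=> k /(fsubsetP (msuppD_le _ _)); rewrite inE => /orP[/nL1 // |].
  by move/(fsubsetP msuppU_le); rewrite inE => /eqP->.
- move=> k /(fsubsetP (msuppD_le _ _)); rewrite inE => /orP[/b1 /ltW // |].
  by move/(fsubsetP msuppU_le); rewrite inE => /eqP->.
Qed.

Lemma NF_uniq u a b : NFP u a -> NFP u b -> a = b.
Proof.
move=> [Pa na] [Pb nb]; apply/eqP; rewrite -subr_eq0; apply/negPn/negP => nz.
have [m [mi mx]] := top_exists nz.
have : LP m.
  exists (a - b); split => //.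
  have -> : a - b = (u - b) - (u - a) by malg_ring.
  exact: PB.
move: mi => /(fsubsetP (msuppB_le _ _)); rewrite inE => /orP[/na // | /nb //].
Qed.

Lemma NF_ex u : exists u', NFP u u' /\ forall b,
  (forall k, k \in msupp u -> (k < b)%O) -> forall k, k \in msupp u' -> (k < b)%O.
Proof.
case: (eqVneq u 0) => [->|nz].
  by exists 0; split; [exact: NFP0 | move=> b _ k; rewrite msupp0].
have [m [mi mx]] := top_exists nz; have [u' [N bu]] := NF_le mx.
by exists u'; split => // b ub k /bu km; exact: le_lt_trans km (ub _ mi).
Qed.

Definition NF u := proj1_sig (constructive_indefinite_description _ (NF_ex u)).
Lemma NF_spec u : NFP u (NF u) /\ forall b,
  (forall k, k \in msupp u -> (k < b)%O) -> forall k, k \in msupp (NF u) -> (k < b)%O.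
Proof. exact: (proj2_sig (constructive_indefinite_description _ (NF_ex u))). Qed.

Lemma NF_red : is_reduction NF.
Proof.
split.
- move=> a u v; apply: (NF_uniq (u := a *: u + v)); first exact: (NF_spec _).1.
  split.
    have -> : (a *: u + v) - (a *: NF u + NF v) = a *: (u - NF u) + (v - NF v)
      by malg_ring.
    by apply: Plin; [exact: (NF_spec u).1.1 | exact: (NF_spec v).1.1].
  move=> k /(fsubsetP (msuppD_le _ _)); rewrite inE => /orP[|].
    by move/(fsubsetP (msuppZ_le _ _)); exact: (NF_spec u).1.2.
  exact: (NF_spec v).1.2.
- move=> v; apply: NF_uniq (NF_spec _).1 _.
  by split; [rewrite subrr | exact: (NF_spec v).1.2].
- move=> g; case: (classic (LP g)) => [[v [Pv [vi vx]]] | nL].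
    pose u1 := << g >> - (v@_g)^-1 *: v.
    have u1m : forall k, k \in msupp u1 -> (k < g)%O.
      move=> k kin; have km : (k <= g)%O.
        move: kin => /(fsubsetP (msuppB_le _ _)); rewrite inE => /orP[|].
          by rewrite msupp_U inE => /eqP->.
        by move/(fsubsetP (msuppZ_le _ _)) => /vx.
      rewrite lt_neqAle km andbT; apply/eqP => ekm; move: kin.
      rewrite ekm -mcoeff_neq0 /u1 mcoeffB mcoeffZ mcoeffUU mulVf ?subrr ?eqxx //.
      by rewrite mcoeff_neq0.
    have E : NF << g >> = NF u1.
      apply: NF_uniq (NF_spec _).1 _; split; last exact: (NF_spec u1).1.2.
      have -> : << g >> - NF u1 = (v@_g)^-1 *: v + (u1 - NF u1) by rewrite /u1; malg_ring.
      by apply: Plin => //; exact: (NF_spec u1).1.1.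
    by rewrite E; apply: vle_lt; exact: (NF_spec u1).2 _ u1m.
  have E : NF << g >> = << g >>.
    apply: NF_uniq (NF_spec _).1 _; split; first by rewrite subrr.
    by move=> k; rewrite msupp_U inE => /eqP->.
  by rewrite E /vle eqxx orbT.
Qed.

Lemma NF_ker v : NF v = 0 <-> P v.
Proof.
split=> [E | Pv]; first by have := (NF_spec v).1.1; rewrite E subr0.
apply: NF_uniq (NF_spec v).1 _.
by split; [rewrite subr0 | move=> k; rewrite msupp0].
Qed.

Lemma ker_inv_spec : is_reduction (ker_inv P) /\ forall v, ker_inv P v = 0 <-> P v.
Proof.
have ex : exists T : KG -> KG, is_reduction T /\ forall v, T v = 0 <-> P v.
  by exists NF; split; [exact: NF_red | exact: NF_ker].
exact: (epsilon_spec (inhabits id) _ ex).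
Qed.
End KerInv.

End Aux.

Lemma split_sum {K : fieldType} {d : Order.disp_t} {G : orderType d}
  (F : nat -> {malg K[G]}) i n : (i.+1 <= n)%N ->
  \sum_(1 <= j < n.+1) F j =
  \sum_(1 <= j < i.+1) F j + (F i.+1 + \sum_(i.+2 <= j < n.+1) F j).
Proof.
move=> le; rewrite (@big_cat_nat _ _ _ i.+1 1 n.+1) //; last by apply: leqW.
by rewrite (@big_ltn _ _ _ i.+1 n.+1).
Qed.

Theorem mainTheorem6 (K : fieldType) (d : Order.disp_t) (G : orderType d)
  (wfG : well_founded (fun x y : G => (x < y)%O))
  (n : nat) (T : nat -> {malg K[G]} -> {malg K[G]})
  (hT : forall i, (1 <= i <= n)%N -> is_reduction (T i)) :
  forall (i : nat) (g : G),
    in_lt_syz n T i g <->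
    ((2 <= i <= n)%N /\ red (rjoin (rmeet_upto T i.-1) (T i)) g).
Proof.
have join : forall i', (i'.+1 <= n)%N -> forall g0,
   red (rjoin (rmeet_upto T i') (T i'.+1)) g0 <->
   exists v, (exists w : nat -> {malg K[G]},
       (forall j, (1 <= j <= i')%N -> T j (w j) = 0) /\ v = \sum_(1 <= j < i'.+1) w j)
     /\ T i'.+1 v = 0 /\ topof v g0.
  move=> i' le g0.
  have [linI _ _] := hT i'.+1 le.
  pose PU := fun v => exists w : nat -> {malg K[G]},
       (forall j, (1 <= j <= i')%N -> T j (w j) = 0) /\ v = \sum_(1 <= j < i'.+1) w j.
  have PU0 : PU 0.
    exists (fun _ => 0); split; last by rewrite big1.
    move=> j jr; have jn : (1 <= j <= n)%N by lia.
    have [lin _ _] := hT j jn; exact: lin0 lin.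
  have PUlin : forall a u v, PU u -> PU v -> PU (a *: u + v).
    move=> a u v [w1 [h1 ->]] [w2 [h2 ->]].
    exists (fun j => a *: w1 j + w2 j); split; last by rewrite big_split /= -scaler_sumr.
    move=> j jr; have jn : (1 <= j <= n)%N by lia.
    have [lin _ _] := hT j jn.
    by rewrite lin h1 // h2 // scaler0 addr0.
  have [Ured Uker] := ker_inv_spec wfG PU0 PUlin.
  have [Ulin _ _] := Ured.
  pose PJ := fun v => ker_inv PU v = 0 /\ T i'.+1 v = 0.
  have PJ0 : PJ 0 by rewrite /PJ (lin0 Ulin) (lin0 linI).
  have PJlin : forall a u v, PJ u -> PJ v -> PJ (a *: u + v).
    move=> a u v [hu1 hu2] [hv1 hv2].
    by rewrite /PJ Ulin linI hu1 hu2 hv1 hv2 scaler0 addr0.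
  have [Jred Jker] := ker_inv_spec wfG PJ0 PJlin.
  have -> : rjoin (rmeet_upto T i') (T i'.+1) = ker_inv PJ by [].
  rewrite (red_char Jred); split => [[v [Jv tv]]|[v [Pv [Tv tv]]]]; exists v.
    by move/Jker: Jv => [/Uker Pv Tv].
  by split => //; apply/Jker; split => //; apply/Uker.
move=> i g; split.
  move=> [w [[kerw sumw] nzw [c [coords /andP[i1 iN] cig lead]]]].
  case: i i1 iN cig lead => [//|i'] _ iN cig lead.
  have wz : forall j, (i'.+1 < j <= n)%N -> w j = 0.
    move=> j jr; have j1 : (1 <= j <= n)%N by lia.
    have [_ ->] := coords j j1.
    have -> : c j = 0.
      apply/malgP => h; rewrite mcoeff0; apply/eqP; apply/negPn/negP => nz.
      by have [|[ji _]] := lead j h j1 nz; lia.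
    by rewrite msupp0 big_seq_fset0.
  have wi : w i'.+1 = - \sum_(1 <= j < i'.+1) w j.
    have R0 : \sum_(i'.+2 <= j < n.+1) w j = 0.
      by rewrite big_nat_cond big1 // => j /andP[jr _]; apply: wz; lia.
    move: sumw; rewrite (split_sum _ iN) R0.
    by rewrite addr0 addrC => /eqP; rewrite addr_eq0 => /eqP.
  have ti : topof (w i'.+1) g.
    have [cr ->] := coords i'.+1 (ltac:(lia)).
    apply: comb_top => //; first exact: hT.
    split; first by rewrite -mcoeff_neq0.
    move=> h; rewrite -mcoeff_neq0 => nz.
    have jn : (1 <= i'.+1 <= n)%N by lia.
    by have [|[_ ->] //] := lead i'.+1 h jn nz; rewrite ltnn.
  split.
    have : i' != 0%N.
      apply/eqP => i0; subst i'; move: ti.1.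
      by rewrite wi big_geq // oppr0 msupp0.
    lia.
  apply/(join i' iN); exists (w i'.+1); split; last by split => //; apply: kerw; lia.
  exists (fun j => - w j); split; last by rewrite wi sumrN.
  move=> j jr; have [lin _ _] := hT j (ltac:(lia)).
  by rewrite (linN lin) kerw ?oppr0 //; lia.
move=> [/andP[i2 iN] rj].
case: i i2 iN rj => [//|i'] i2 iN rj.
have [v [[u [hu vu]] [Tv tv]]] := (join i' iN g).1 rj.
pose W j := if (j < i'.+1)%N then u j else if j == i'.+1 then - v else 0.
have kerW : in_kerF n T W.
  move=> j jr; have [lin _ _] := hT j jr; rewrite /W; case: ltnP => ji.
    by apply: hu; lia.
  case: eqP => [ej|_]; last exact: lin0 lin.
  by subst j; rewrite (linN lin) Tv oppr0.
exists W; split; [split|..].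
- exact: kerW.
- rewrite (split_sum _ iN).
  have -> : \sum_(1 <= j < i'.+1) W j = \sum_(1 <= j < i'.+1) u j.
    by apply: eq_big_nat => j /andP[_ ji]; rewrite /W ji.
  have R0 : \sum_(i'.+2 <= j < n.+1) W j = 0.
    rewrite big_nat_cond big1 // => j /andP[/andP[j1 j2] _].
    by rewrite /W ltnNge (ltnW j1) /= (gtn_eqF j1).
  rewrite R0.
  by rewrite /W ltnn eqxx -vu addr0 subrr.
- exists i'.+1; split; first by lia.
  rewrite /W ltnn eqxx oppr_eq0; apply/eqP => v0; move: tv.1.
  by rewrite v0 msupp0.
- exists (fun j => coord (T j) (W j)); split.
  + move=> j jr /=; split; first by move=> h; exact: coord_red.
    refine (coord_sum (hT j jr) (kerW j jr)).
  + by rewrite /= iN.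
  + have iin : (1 <= i'.+1 <= n)%N by rewrite /= iN.
    rewrite coordE (Lker (hT _ iin) Tv tv) /W ltnn eqxx mcoeffN oppr_eq0.
    by rewrite mcoeff_neq0 tv.1.
  + move=> j h jr; rewrite coordE; case: ifP => _; last by rewrite eqxx.
    rewrite /W; case: ltnP => ji; first by left.
    case: (eqVneq j i'.+1) => [ej|nej]; last by rewrite mcoeff0 eqxx.
    subst j.
    rewrite mcoeffN oppr_eq0 mcoeff_neq0 => hv; right; split => //.
    exact: tv.2.
Qed.
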